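(* Let $G$ be a finite group and let $C$ be an $\mathtt{N}$-class of the first type. Assume that there exist a prime $p$, an integer $r\geq 2$ and an integer $s$ with $0\le s\le r-2$ such that $|\hat{C}|=p^r$ and $|C|=p^r-p^s$. Then $\hat{C}=C\cup\{1\}$. Moreover $s=0$ and $C=[y]_{\diamond}$ for some $y\in G$ such that $o(y)$ is not a prime power and $\phi(o(y))=p^r-1$.
   Context: $\phi$ is Euler's totient function and $o(g)$ the order of $g$. The power graph $\mathcal{P}(G)$ of a finite group $G$ has vertex set $G$, and distinct $x,y$ are adjacent iff $x=y^m$ or $y=x^m$ for some positive integer $m$. For $x\in G$, $N[x]$ is the closed neighbourhood of $x$ in $\mathcal{P}(G)$ (i.e. $x$ together with all vertices adjacent to $x$). Write $x\mathtt{N}y$ iff $N[x]=N[y]$; its classes are the $\mathtt{N}$-classes, $[x]_{\mathtt{N}}$ denoting the class of $x$. Write $x\diamond y$ iff $\langle x\rangle=\langle y\rangle$; $[x]_\diamond$ denotes the class of $x$. The star class $\mathcal{S}$ is $[1]_{\mathtt{N}}$, the set of vertices adjacent to all other vertices. An $\mathtt{N}$-class $C\neq\mathcal{S}$ is of the first type if it is also a $\diamond$-class. For $X\subseteq G$, $N[X]:=\bigcap_{x\in X}N[x]$ and $\hat{X}:=N[N[X]]$. *)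

(* Defs.v *)
From mathcomp Require Import all_boot all_fingroup.
Set Implicit Arguments. Unset Strict Implicit. Unset Printing Implicit Defensive.
Local Open Scope group_scope.

Section PowerGraph.
Variable gT : finGroupType.

(* Power graph adjacency: distinct x, y with x a power of y or y a power of x.
   In a finite group, "x = y^m for some positive m" is exactly x \in <[y]>. *)
Definition pg_adj (x y : gT) : bool :=
  (x != y) && ((x \in <[y]>) || (y \in <[x]>)).

Definition cnbhd (x : gT) : {set gT} := [set y | (y == x) || pg_adj x y].

Definition Nclass (x : gT) : {set gT} := [set y | cnbhd y == cnbhd x].

Definition dclass (x : gT) : {set gT} := [set y | <[y]> == <[x]>].

Definition star_class : {set gT} := Nclass 1.

Definition is_Nclass (C : {set gT}) : Prop := exists x, C = Nclass x.

Definition first_type (C : {set gT}) : Prop :=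
  is_Nclass C /\ C != star_class /\ exists x, C = dclass x.

Definition cnbhd_set (X : {set gT}) : {set gT} := \bigcap_(x in X) cnbhd x.
Definition hat (X : {set gT}) : {set gT} := cnbhd_set (cnbhd_set X).

End PowerGraph.

Definition prime_power (n : nat) : Prop := exists q k, prime q /\ n = (q ^ k)%N.

(* Main.v *)
Require Import Defs.
From mathcomp Require Import all_boot all_fingroup.
From mathcomp Require Import all_solvable.
From Stdlib Require Import Classical.
From mathcomp Require Import zify.
Set Implicit Arguments. Unset Strict Implicit. Unset Printing Implicit Defensive.
Local Open Scope group_scope.

Lemma totient_dvd n m : (0 < m)%N -> (n %| m)%N -> (totient n <= totient m)%N.
Proof.
move=> m0 nm; have n0 : (0 < n)%N := dvdn_gt0 m0 nm.
rewrite !totientE // [X in (_ <= X)%N](bigID (fun p => p \in primes n)) /=.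
apply: (leq_trans _ (leq_pmulr _ _)); last first.
  rewrite big_seq_cond prodn_cond_gt0 // => p /andP[]; rewrite mem_primes.
  case/and3P=> pp _ _ _; rewrite muln_gt0 expn_gt0 (prime_gt0 pp) /= andbT.
  by have := prime_gt1 pp; lia.
have -> : (\prod_(p <- primes n) (p.-1 * p ^ (logn p n).-1) =
   \prod_(p <- primes m | p \in primes n) (p.-1 * p ^ (logn p n).-1))%N.
  rewrite -[RHS]big_filter; apply: perm_big; apply: uniq_perm.
  - exact: primes_uniq.
  - by rewrite filter_uniq // primes_uniq.
  move=> p; rewrite mem_filter; case pn: (p \in primes n) => //=.
  move: pn; rewrite !mem_primes => /and3P[-> _ pd] /=.
  by rewrite m0 (dvdn_trans pd nm).
apply: leq_prod => p; rewrite mem_primes => /and3P[pp _ _].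
rewrite leq_mul2l; apply/orP; right.
by rewrite leq_pexp2l ?prime_gt0 // -!subn1 leq_sub2r // dvdn_leq_log.
Qed.

Lemma coprime_self d : coprime d d -> d = 1%N.
Proof. by rewrite /coprime gcdnn => /eqP. Qed.

Lemma not_pp_arith n m : (0 < n)%N -> ~ prime_power n -> (m %| n)%N -> m != 1%N ->
  m != n -> (forall d, d %| n -> (m %| d) || (d %| m))%N -> False.
Proof.
move=> n0 npp mn m1 mnn H.
have m0 : (0 < m)%N := dvdn_gt0 n0 mn.
have m1' : (1 < m)%N by lia.
set q := pdiv m.
have pq : prime q := pdiv_prime m1'.
have qm : (q %| m)%N := pdiv_dvd m.
have qn : (q %| n)%N := dvdn_trans qm mn.
have co : coprime n`_q n`_q^' := coprime_partC _ _ _.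
have nE : (n`_q * n`_q^' = n)%N := partnC _ n0.
have d1E : (n`_q = q ^ logn q n)%N := p_part q n.
have lg : (0 < logn q n)%N by rewrite logn_gt0 mem_primes pq n0 qn.
have qd1 : (q %| n`_q)%N by rewrite d1E -(prednK lg) expnS dvdn_mulr.
case/orP: (H _ (dvdn_part q^' n)) => [md2 | d2m].
  have qd2 : (q %| n`_q^')%N := dvdn_trans qm md2.
  have := coprime_dvdr qd2 (coprime_dvdl qd1 co).
  by move/coprime_self=> q1; move: (prime_gt1 pq); rewrite q1.
case/orP: (H _ (dvdn_part q n)) => [md1 | d1m].
  have d21 := dvdn_trans d2m md1.
  have /coprime_self d2 : (coprime n`_q^' n`_q^')%N.
    exact: coprime_dvdl d21 co.
  by apply: npp; exists q, (logn q n); split=> //; rewrite -{1}nE d2 muln1 d1E.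
have : (n %| m)%N by rewrite -nE Gauss_dvd // d1m d2m.
move=> nm; apply/negP: mnn; apply/negPn.
by rewrite eqn_dvd mn nm.
Qed.

Section G.
Variable gT : finGroupType.
Implicit Types x y a : gT.

Definition comp a y := (y \in <[a]>) || (a \in <[y]>).

Lemma cnbhdE a y : (y \in cnbhd a) = comp a y.
Proof.
rewrite /cnbhd /pg_adj inE /comp; have [->|ne] := eqVneq y a; first by rewrite cycle_id.
by rewrite /= orbC.
Qed.

Lemma comp_sym a y : comp a y = comp y a.
Proof. by rewrite /comp orbC. Qed.

Lemma comp_cycle a y y' : <[y']> = <[y]> -> comp a y' = comp a y.
Proof. by move=> e; rewrite /comp -(cycle_subG y') e cycle_subG. Qed.

Lemma ord_sub a m : (m %| #[a])%N -> #[a ^+ (#[a] %/ m)] = m.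
Proof.
move=> md; have := cycle_sub_group md => /setP /(_ <[a ^+ (#[a] %/ m)]>%G).
by rewrite !inE eqxx => /andP[_ /eqP].
Qed.

Lemma cyc_sub x y a : y \in <[x]> -> a \in <[x]> -> (#[y] %| #[a])%N -> y \in <[a]>.
Proof.
move=> yx ax ya.
have mx : (#[y] %| #[x])%N := dvdn_trans ya (order_dvdG ax).
have := cycle_sub_group mx => /setP E.
have E1 := E <[y]>%G; have E2 := E <[(a ^+ (#[a] %/ #[y]))]>%G.
rewrite !inE cycle_subG yx eqxx /= in E1.
rewrite !inE cycle_subG (groupX _ ax) /= in E2.
have o := @ord_sub a #[y] ya; rewrite /order in o; rewrite o eqxx in E2.
move/esym/eqP: E1 => E1; move/esym/eqP: E2 => E2.
have e : <[y]> = <[a ^+ (#[a] %/ #[y])]> by rewrite -[LHS]/(gval _) E1 -E2.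
have : y \in <[a ^+ (#[a] %/ #[y])]> by rewrite -e cycle_id.
by apply: subsetP; rewrite cycle_subG groupX // cycle_id.
Qed.

End G.

Lemma pow_arith p r s : prime p -> (2 <= r)%N -> (s <= r - 2)%N -> (4 * p ^ s <= p ^ r)%N.
Proof.
move=> pp r2 sr.
have e : (p ^ r = p ^ (r - s) * p ^ s)%N by rewrite -expnD subnK //; lia.
have h : (p ^ 2 <= p ^ (r - s))%N by rewrite leq_pexp2l ?prime_gt0 //; lia.
have p2 := prime_gt1 pp.
have h4 : (4 <= p ^ 2)%N by rewrite expnS expn1; nia.
rewrite e; move: h h4; generalize (p ^ (r - s))%N (p ^ s)%N; nia.
Qed.

Lemma pp_arith p q r s k : prime p -> prime q -> (2 <= r)%N -> (s <= r - 2)%N ->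
  (4 * p ^ s <= p ^ r)%N -> (q ^ k = p ^ r)%N -> totient (q ^ k) = (p ^ r - p ^ s)%N -> False.
Proof.
move=> pp pq r2 sr ar e t.
have ps : (0 < p ^ s)%N by rewrite expn_gt0 prime_gt0.
have k0 : (0 < k)%N.
  case: k e {t} => // /esym e1; rewrite expn0 in e1; lia.
have qp : q = p.
  have : (q %| p ^ r)%N by rewrite -e -(prednK k0) expnS dvdn_mulr.
  by rewrite Euclid_dvdX // dvdn_prime2 // => /andP[/eqP -> _].
subst q. have kr : k = r := expnI (prime_gt1 pp) e. subst k.
rewrite totient_pfactor // in t.
have e2 : (p ^ r = p * p ^ r.-1)%N by rewrite -expnS prednK //; lia.
have e3 : (p ^ s = p ^ r.-1)%N.
  have p1 := prime_gt1 pp; move: t ps p1 ar; rewrite e2; generalize (p ^ r.-1)%N (p ^ s)%N.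
  move=> A B t ps p1 ar'.
  have h : (p * A = p.-1 * A + A)%N by rewrite -{1}(prednK (ltnW p1)) mulSn addnC.
  move: t ar'; rewrite h; generalize (p.-1 * A)%N; lia.
have := expnI (prime_gt1 pp) e3; lia.
Qed.

Theorem mainTheorem1 (gT : finGroupType) (C : {set gT}) (p r s : nat) :
  first_type C -> prime p -> (2 <= r)%N -> (s <= r - 2)%N ->
  #|hat C| = (p ^ r)%N -> #|C| = (p ^ r - p ^ s)%N ->
  hat C = C :|: [set 1] /\ s = 0%N /\
  exists y : gT, C = dclass y /\ ~ prime_power #[y] /\ totient #[y] = (p ^ r - 1)%N.
Proof.
move=> [[x1 HC1] [Hns [x HCx]]] pp r2 sr hH hC.
have ar := pow_arith pp r2 sr.
have ps0 : (0 < p ^ s)%N by rewrite expn_gt0 prime_gt0.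
have xC : x \in C by rewrite HCx inE.
have nbC : forall c, c \in C -> cnbhd c = cnbhd x.
  by move=> c cC; move: cC xC; rewrite HC1 !inE => /eqP -> /eqP ->.
have cbE : cnbhd_set C = cnbhd x.
  apply/setP=> z; apply/bigcapP/idP => [h|h c cC]; first exact: h x xC.
  by rewrite nbC.
have hatP : forall y, reflect (forall a, comp x a -> comp a y) (y \in hat C).
  move=> y; rewrite /hat cbE; apply: (iffP bigcapP) => h a.
    by move=> ha; rewrite -cnbhdE; apply: h; rewrite cnbhdE.
  by rewrite !cnbhdE; apply: h.
have cardC : #|C| = totient #[x].
  by rewrite HCx totient_gen; apply: eq_card => y; rewrite !inE /generator eq_sym.
have phiE : totient #[x] = (p ^ r - p ^ s)%N by rewrite -cardC.
have one_nC : (1 : gT) \notin C.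
  apply/negP; rewrite HCx inE cycle1 => /eqP e.
  have n1 : #[x] = 1%N by rewrite /order -e cards1.
  have t1 : totient 1 = 1%N by [].
  by move: phiE; rewrite n1 t1; lia.
have Cx : forall c, c \in C -> <[c]> = <[x]> by move=> c; rewrite HCx inE => /eqP.
have C_hat : C \subset hat C.
  apply/subsetP=> c cC; apply/hatP=> a ha.
  by rewrite (comp_cycle a (Cx c cC)) comp_sym.
have one_hat : (1 : gT) \in hat C by apply/hatP=> a _; rewrite /comp group1.
have C1 : #|C :|: [set 1]| = (totient #[x]).+1.
  by rewrite setUC cardsU1 one_nC cardC.
have C1sub : C :|: [set 1] \subset hat C :&: <[x]>.
  apply/subsetP => z; rewrite !inE => /orP[zC|/eqP->]; last by rewrite one_hat group1.
  by rewrite (subsetP C_hat) //= -cycle_subG Cx.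
have hat_x : hat C \subset <[x]>.
  apply/subsetP => y yH; apply/negPn/negP => ynx.
  have : comp x y by apply: (hatP y yH); rewrite /comp cycle_id.
  rewrite /comp (negbTE ynx) /= => xy.
  have sub : dclass y \subset hat C :\: <[x]>.
    apply/subsetP=> z; rewrite inE => /eqP ez; rewrite !inE.
    rewrite -cycle_subG ez cycle_subG ynx /=.
    by apply/hatP => a ha; rewrite (comp_cycle a ez); apply: (hatP y yH).
  have := subset_leq_card sub.
  have -> : #|dclass y| = totient #[y].
    by rewrite totient_gen; apply: eq_card => z; rewrite !inE /generator eq_sym.
  have tle : (totient #[x] <= totient #[y])%N.
    by apply: totient_dvd (order_gt0 y) (cardSg _); rewrite cycle_subG.
  have h2 : (#|hat C :&: <[x]>| + #|hat C :\: <[x]>| = #|hat C|)%N := cardsID _ _.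
  have := subset_leq_card C1sub.
  rewrite C1 hH phiE in tle h2 * => h1 h3; lia.
case: (classic (prime_power #[x])) => [[q [k [pq nE]]] | npp].
  have x_hat : <[x]> \subset hat C.
    apply/subsetP=> y yx; apply/hatP => a; rewrite /comp => /orP[ax|xa]; last first.
      by apply/orP; left; apply: (subsetP _ y yx); rewrite cycle_subG.
    have hy : (#[y] %| q ^ k)%N by rewrite -nE; exact: order_dvdG yx.
    have [i _ yi] := elimT (dvdn_pfactor _ _ pq) hy.
    have ha : (#[a] %| q ^ k)%N by rewrite -nE; exact: order_dvdG ax.
    have [j _ aj] := elimT (dvdn_pfactor _ _ pq) ha.
    case: (leqP i j) => ij; apply/orP; [left | right].
      by apply: (cyc_sub yx ax); rewrite yi aj dvdn_exp2l.
    by apply: (cyc_sub ax yx); rewrite yi aj dvdn_exp2l // ltnW.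
  have hE : hat C = <[x]> by apply/eqP; rewrite eqEsubset hat_x x_hat.
  exfalso; apply: (@pp_arith p q r s k pp pq r2 sr ar); first by rewrite -nE -hH hE.
  by rewrite -nE.
have sub2 : hat C \subset C :|: [set 1].
  apply/subsetP=> y yH; have yx := subsetP hat_x y yH; rewrite !inE.
  have [->|y1] := eqVneq y 1; first by rewrite orbT.
  rewrite orbF HCx inE; apply/negPn/negP => nyx; exfalso.
  apply: (not_pp_arith (order_gt0 x) npp (order_dvdG yx)).
  - by rewrite order_eq1.
  - apply/negP => /eqP e; move/negP: nyx; apply.
    by rewrite eqEcard cycle_subG yx /=; move: e; rewrite /order => ->.
  move=> d dn; have oz := ord_sub dn.
  have hz : comp x (x ^+ (#[x] %/ d)) by rewrite /comp mem_cycle.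
  have := hatP y yH _ hz; set z := x ^+ (#[x] %/ d) in oz hz *.
  rewrite /comp -oz => /orP[yz|zy]; apply/orP; [left|right]; exact: order_dvdG.
have s0 : s = 0%N.
  have := subset_leq_card sub2; rewrite C1 hH phiE => h.
  case: (posnP s) => // s0; have := leq_pexp2l (prime_gt0 pp) s0.
  have := prime_gt1 pp; rewrite expn1; lia.
have hE : hat C = C :|: [set 1].
  apply/eqP; rewrite eqEsubset sub2 /=.
  exact: (subset_trans C1sub (subsetIl _ _)).
split=> //; split=> //; exists x; split=> //; split=> //.
by rewrite phiE s0 expn0.
Qed.
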